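(* Let $d\ge2$ and let $v=(v_1,\dots,v_d)\in\mathbb{R}^d$ satisfy $\sum_j v_j=1$ and $\sum_j v_j^2=d$. Let $v_{\max}=\max_j v_j$, $v_{\min}=\min_j v_j$, $\|v\|_1=\sum_j|v_j|$. Then $$\tfrac12\bigl[v_{\max}(\|v\|_1-1)+|v_{\min}|(\|v\|_1+1)\bigr]\ge d-\sqrt{d+1}+\tfrac2d\sqrt{d+1}-\tfrac2d,$$ with equality if and only if the components of $v$ arranged in nonincreasing order $v^\downarrow$ satisfy $$v^\downarrow_1=\frac{(d-1)\sqrt{d+1}+1}{d},\qquad v^\downarrow_2=\dots=v^\downarrow_d=\frac{1-\sqrt{d+1}}{d}.$$ *)

(* Defs.v *)
From mathcomp Require Import all_boot all_order all_algebra.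
From mathcomp Require Import reals.
Set Implicit Arguments. Unset Strict Implicit. Unset Printing Implicit Defensive.
Import Order.TTheory GRing.Theory Num.Theory.
Local Open Scope ring_scope.

Definition comps (R : realType) (d : nat) (v : 'I_d -> R) : seq R :=
  [seq v j | j <- enum 'I_d].

(* max_j v_j and min_j v_j (meaningful for d >= 1; the statement assumes d >= 2). *)
Definition vmax (R : realType) (d : nat) (v : 'I_d -> R) : R :=
  \big[Num.max/head 0 (comps v)]_(j < d) v j.
Definition vmin (R : realType) (d : nat) (v : 'I_d -> R) : R :=
  \big[Num.min/head 0 (comps v)]_(j < d) v j.

Definition norm1 (R : realType) (d : nat) (v : 'I_d -> R) : R :=
  \sum_(j < d) `|v j|.

Definition vdown (R : realType) (d : nat) (v : 'I_d -> R) : seq R :=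
  sort (fun x y : R => y <= x) (comps v).

(* Main.v *)
Require Import Defs.
From mathcomp Require Import all_boot all_order all_algebra.
From mathcomp Require Import reals.
From mathcomp Require Import ring lra.
Import Order.TTheory GRing.Theory Num.Theory.
Local Open Scope ring_scope.

Lemma sum_sq_shift (R : realType) d (v : 'I_d -> R) c :
  \sum_(j < d) (v j - c) ^+ 2 =
  \sum_(j < d) v j ^+ 2 - 2 * c * \sum_(j < d) v j + d%:R * c ^+ 2.
Proof.
rewrite (eq_bigr (fun j => (v j ^+ 2 - 2 * c * v j) + c ^+ 2)); last first.
  by move=> j _; ring.
rewrite big_split /= sumrB -mulr_sumr sumr_const card_ord -mulr_natl; ring.
Qed.

Lemma sum_affine (R : realType) d (v : 'I_d -> R) (x y : R) :
  \sum_(j < d) (x + y * v j) = d%:R * x + y * \sum_(j < d) v j.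
Proof.
by rewrite big_split /= sumr_const card_ord mulr_sumr mulr_natl.
Qed.

Lemma sum_ge_term (R : realType) d (F : 'I_d -> R) k :
  (forall j, 0 <= F j) -> F k <= \sum_(j < d) F j.
Proof.
move=> F0; rewrite (bigD1 k) //= lerDl; apply: sumr_ge0 => j _; exact: F0.
Qed.

Lemma big_attained (R : realType) d (v : 'I_d -> R) x0 (op : R -> R -> R) :
  (exists k, x0 = v k) -> (forall x y, op x y = x \/ op x y = y) ->
  exists k, \big[op/x0]_(j < d) v j = v k.
Proof.
move=> h0 hop; apply: (big_ind (fun x => exists k, x = v k)) => //.
  by move=> x y [k ->] [l ->]; case: (hop (v k) (v l)) => ->; [exists k | exists l].
by move=> j _; exists j.
Qed.

Lemma head_comp (R : realType) d (v : 'I_d -> R) : (0 < d)%N ->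
  exists k, head 0 [seq v j | j <- enum 'I_d] = v k.
Proof.
move=> d0; have : Ordinal d0 \in enum 'I_d by rewrite mem_enum.
by case: (enum 'I_d) => [|j s] //= _; exists j.
Qed.

Lemma big_max_ge (R : realType) (I : eqType) (r : seq I) (F : I -> R) x0 i :
  i \in r -> F i <= \big[Num.max/x0]_(j <- r) F j.
Proof.
elim: r => //= y r IH; rewrite in_cons big_cons le_max => /orP[/eqP->|/IH->].
  by rewrite lexx.
by rewrite orbT.
Qed.

Lemma big_min_le (R : realType) (I : eqType) (r : seq I) (F : I -> R) x0 i :
  i \in r -> \big[Num.min/x0]_(j <- r) F j <= F i.
Proof.
elim: r => //= y r IH; rewrite in_cons big_cons ge_min => /orP[/eqP->|/IH->].
  by rewrite lexx.
by rewrite orbT.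
Qed.

Lemma path_nseq (R : realType) n (x y : R) :
  y <= x -> path (fun a b : R => b <= a) x (nseq n y).
Proof.
elim: n x => //= n IH x hyx; rewrite hyx /=; exact: IH.
Qed.

Lemma map_cst (T : Type) (R : Type) (s : seq T) (x : R) :
  map (fun=> x) s = nseq (size s) x.
Proof. by elim: s => //= y s ->. Qed.

Lemma vmax_ge (R : realType) d (v : 'I_d -> R) j : v j <= vmax v.
Proof. by rewrite /vmax; apply: big_max_ge; rewrite mem_index_enum. Qed.

Lemma vmin_le (R : realType) d (v : 'I_d -> R) j : vmin v <= v j.
Proof. by rewrite /vmin; apply: big_min_le; rewrite mem_index_enum. Qed.

Lemma vmax_att (R : realType) d (v : 'I_d -> R) : (0 < d)%N ->
  exists k, vmax v = v k.
Proof.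
move=> d0; apply: big_attained.
  by have [k hk] := head_comp _ _ v d0; exists k; rewrite /comps hk.
by move=> x y; case: (leP x y) => h; [right | left].
Qed.

Lemma vmin_att (R : realType) d (v : 'I_d -> R) : (0 < d)%N ->
  exists k, vmin v = v k.
Proof.
move=> d0; apply: big_attained.
  by have [k hk] := head_comp _ _ v d0; exists k; rewrite /comps hk.
by move=> x y; case: (leP x y) => h; [left | right].
Qed.

Theorem lemmaS1 (R : realType) (d : nat) (v : 'I_d -> R)
  (hd : (2 <= d)%N)
  (hsum : \sum_(j < d) v j = 1)
  (hsq : \sum_(j < d) v j ^+ 2 = d%:R) :
  let s := Num.sqrt (d%:R + 1) in
  let lhs := 2^-1 * (vmax v * (norm1 v - 1) + `|vmin v| * (norm1 v + 1)) in
  let rhs := d%:R - s + 2 / d%:R * s - 2 / d%:R in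
  rhs <= lhs /\
  (lhs = rhs <->
     vdown v = ((d%:R - 1) * s + 1) / d%:R :: nseq d.-1 ((1 - s) / d%:R)).
Proof.
move=> s lhs rhs.
have d0 : (0 < d)%N by apply: leq_trans hd.
have D2 : 2 <= d%:R :> R by rewrite (ler_nat R 2 d).
have D0 : 0 < d%:R :> R by lra.
have Dn0 : d%:R != 0 :> R by rewrite gt_eqF.
have D1n0 : d%:R - 1 != 0 :> R by rewrite gt_eqF //; lra.
have s0 : 0 <= s := sqrtr_ge0 _.
have s2 : s ^+ 2 = d%:R + 1 by rewrite sqr_sqrtr //; lra.
have s1 : 1 < s.
  rewrite ltNge; apply/negP => h.
  have : s * s <= 1 * 1 by apply: ler_pM.
  rewrite -expr2 s2; lra.
set D := d%:R in D2 D0 Dn0 D1n0 s2 hsq lhs rhs *.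
have Fa : forall k, D * v k <= (D - 1) * s + 1.
  move=> k; set x := v k.
  have [t ht] : exists t, (D - 1) * t = 1 - x.
    by exists ((1 - x) / (D - 1)); rewrite mulrC divfK.
  have H := sum_ge_term _ _ (fun j => (v j - t) ^+ 2) k (fun j => sqr_ge0 _).
  rewrite /= sum_sq_shift hsum hsq -/D -/x in H.
  have hx : x = 1 - (D - 1) * t by rewrite ht; ring.
  have H2 : 0 <= D * ((D - 1) * (D - 2 * t * 1 + D * t ^+ 2 - (x - t) ^+ 2)).
    apply: mulr_ge0; [lra | apply: mulr_ge0; [lra | lra]].
  have H3 : D * ((D - 1) * (D - 2 * t * 1 + D * t ^+ 2 - (x - t) ^+ 2))
     = ((D - 1) * s) ^+ 2 - (D * x - 1) ^+ 2.
    by rewrite exprMn s2 hx; ring.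
  rewrite H3 in H2.
  have : 0 <= (D - 1) * s by apply: mulr_ge0; lra.
  nra.
have Fm : D * vmin v <= 1 - s.
  set m := vmin v.
  have hm : forall j, m <= v j by move=> j; exact: vmin_le.
  have F1 : D * m <= 1.
    have : \sum_(j < d) m <= \sum_(j < d) v j by apply: ler_sum => j _; exact: hm.
    by rewrite hsum sumr_const card_ord -mulr_natl.
  have hS : \sum_(j < d) (v j - m) = 1 - D * m.
    by rewrite sumrB hsum sumr_const card_ord -mulr_natl.
  have F4 : \sum_(j < d) (v j - m) ^+ 2 <= (\sum_(j < d) (v j - m)) ^+ 2.
    rewrite [X in _ <= X]expr2 mulr_suml; apply: ler_sum => j _.
    rewrite expr2; apply: ler_wpM2l; first by rewrite subr_ge0.
    apply: (sum_ge_term _ _ (fun j => v j - m)) => i; by rewrite subr_ge0.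
  rewrite sum_sq_shift hsum hsq hS -/D in F4.
  have G : (D - 1) * ((D * m - 1) ^+ 2 - s ^+ 2) >= 0.
    have -> : (D - 1) * ((D * m - 1) ^+ 2 - s ^+ 2) =
       D * ((1 - D * m) ^+ 2 - (D - 2 * m * 1 + D * m ^+ 2)) by rewrite s2; ring.
    by apply: mulr_ge0; lra.
  have G2 : s ^+ 2 <= (D * m - 1) ^+ 2.
    by rewrite -subr_ge0; rewrite pmulr_rge0 in G; lra.
  nra.
set a := vmax v in lhs *.
set m := vmin v in lhs Fm *.
set N := norm1 v in lhs *.
have [ka hka] := vmax_att _ _ v d0.
have [km hkm] := vmin_att _ _ v d0.
rewrite -/a in hka; rewrite -/m in hkm.
have ha : forall j, v j <= a by move=> j; exact: vmax_ge.
have hm : forall j, m <= v j by move=> j; exact: vmin_le.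
have hb : - m <= `|m| by rewrite -normrN ler_norm.
have Fs : 2 * D <= (a + `|m|) * N + (a - `|m|).
  have E : \sum_(j < d) ((a + `|m|) * `|v j| + (a - `|m|) * v j) =
     (a + `|m|) * N + (a - `|m|) by rewrite big_split /= -!mulr_sumr hsum mulr1.
  rewrite -E -hsq mulr_sumr; apply: ler_sum => j _.
  have h1 := ha j; have h2 := hm j.
  case: (lerP 0 (v j)) => h.
    rewrite (ger0_norm h); nra.
  rewrite (ltr0_norm h); nra.
set q := (1 - s) / D.
set p := ((D - 1) * s + 1) / D.
have hq : D * q = 1 - s by rewrite /q mulrC divfK.
have hp : D * p = (D - 1) * s + 1 by rewrite /p mulrC divfK.
have hpq : p = q + s.
  apply: (mulfI Dn0); rewrite mulrDr hp hq; ring.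
have hrhs : rhs = D - p - q.
  by rewrite /rhs hpq /q; field.
have Ha : a <= p by rewrite -(ler_pM2l D0) hp hka; exact: Fa.
have Hm : m <= q by rewrite -(ler_pM2l D0) hq.
have Hl : D - a + `|m| <= lhs by rewrite /lhs; lra.
split; first by rewrite hrhs; lra.
have qs1 : q * s + q = -1.
  apply: (mulfI Dn0); have -> : D * (q * s + q) = (D * q) * (s + 1) by ring.
  rewrite hq; lra.
have q0 : q < 0 by rewrite -(pmulr_rlt0 _ D0) hq; lra.
have p0 : 0 < p by rewrite hpq; nra.
split.
- move=> Heq.
  have Hap : a = p by apply: le_anti; rewrite Ha /=; rewrite hrhs in Heq; lra.
  have hvk : v ka = p by rewrite -hka.
  have Hrest : forall j, j != ka -> v j = q.
    have E : \sum_(j < d) (v j - q) ^+ 2 = (v ka - q) ^+ 2.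
      rewrite sum_sq_shift hsum hsq -/D hvk hpq.
      apply: (mulfI Dn0).
      have -> : D * (D - 2 * q * 1 + D * q ^+ 2) = D ^+ 2 - 2 * (D * q) + (D * q) ^+ 2 by ring.
      rewrite hq; have -> : q + s - q = s by ring.
      rewrite s2; lra.
    rewrite (bigD1 ka) //= in E.
    have E2 : \sum_(j < d | j != ka) (v j - q) ^+ 2 = 0 by lra.
    move=> j hj.
    have := @psumr_eq0P _ _ _ _ (fun i _ => sqr_ge0 (v i - q)) E2 j hj.
    by move/eqP; rewrite sqrf_eq0 subr_eq0 => /eqP.
  rewrite /vdown /comps.
  apply: (sorted_eq (leT := fun x y : R => y <= x)).
  + by move=> ? ? ? /= ? ?; lra.
  + by move=> x y /andP[h1 h2]; lra.
  + by apply: sort_sorted => x y; exact: le_total.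
  + by rewrite /=; apply: path_nseq; rewrite hpq; lra.
  + rewrite perm_sort.
    have hk : ka \in enum 'I_d by rewrite mem_enum.
    apply: perm_trans (perm_map v (perm_to_rem hk)) _.
    rewrite /= hvk perm_cons.
    have -> : map v (rem ka (enum 'I_d)) = map (fun=> q) (rem ka (enum 'I_d)).
      apply/eq_in_map => j; rewrite (mem_rem_uniq _ (enum_uniq _)) => /andP[hj _].
      exact: Hrest.
    by rewrite map_cst size_rem // size_enum_ord.
- move=> Hv.
  have hperm : perm_eq (comps v) (p :: nseq d.-1 q).
    by rewrite -Hv /vdown perm_sym perm_sort perm_refl.
  have hin : forall x, (x \in comps v) = (x \in p :: nseq d.-1 q).
    by move=> x; apply: (perm_mem hperm).
  have dp : (0 < d.-1)%N by rewrite -ltnS prednK.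
  have hv2 : forall j, v j = p \/ v j = q.
    move=> j; have : v j \in comps v by apply: map_f; rewrite mem_enum.
    rewrite hin in_cons mem_nseq => /orP[/eqP->|/andP[_ /eqP->]]; by [left|right].
  have [k hk] : exists k, v k = p.
    have : p \in comps v by rewrite hin mem_head.
    by case/mapP => k _ ->; exists k.
  have [l hl] : exists l, v l = q.
    have : q \in comps v by rewrite hin in_cons mem_nseq dp eqxx orbT.
    by case/mapP => l _ ->; exists l.
  have Hap : a = p.
    apply: le_anti; rewrite Ha /= -hk; exact: ha.
  have Hmq : m = q.
    apply: le_anti; rewrite -{1}hl hm /= hkm; case: (hv2 km) => ->; rewrite ?lexx //.
    rewrite hpq; lra.
  have [c cs] : exists c, c * s = p + q.
    by exists ((p + q) / s); rewrite divfK // gt_eqF //; lra.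
  have habs : forall j, `|v j| = (- q - c * q) + c * v j.
    move=> j; case: (hv2 j) => ->.
      rewrite (gtr0_norm p0).
      have -> : - q - c * q + c * p = - q + c * (p - q) by ring.
      have -> : p - q = s by rewrite hpq; ring.
      rewrite cs; ring.
    rewrite (ltr0_norm q0); ring.
  have hN : N = s - 1 + p + q.
    rewrite /N /norm1 (eq_bigr _ (fun j _ => habs j)) sum_affine hsum -/D.
    have -> : D * (- q - c * q) + c * 1 = - (D * q) + c * (1 - D * q) by ring.
    rewrite hq; lra.
  rewrite hrhs /lhs Hap Hmq hN (ltr0_norm q0) hpq.
  lra.
Qed.
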